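(* Consider the following remote estimation model over the finite horizon $t=0,1,\ldots,T$. A scalar process evolves as $x(t+1)=a x(t)+w(t)$, with $a\in\mathbb{R}$, $x(0)\sim\mathcal{N}(0,1)$ and $\{w(t)\}$ i.i.d. $\mathcal{N}(0,\sigma^2)$. A channel state process $\{c(t)\}\subset\{0,1\}$ is a two-state Markov chain with $\mathbb{P}(c(t+1)=1\mid c(t)=0)=p_{01}$ and $\mathbb{P}(c(t+1)=0\mid c(t)=1)=p_{10}$. At each time $t$ a sensor chooses $u(t)\in\{0,1\}$ by $u(t)=\phi_t(\mathcal{I}(t))$, where $\phi_t$ is measurable and $\mathcal{I}(t)=(\{x(s),c(s)\}_{s=0}^{t},\{u(s)\}_{s=0}^{t-1})$. The estimator satisfies $\hat{x}(0)=0$, and for $t\ge 1$, $\hat{x}(t)=a\hat{x}(t-1)$ if $u(t)c(t)=0$ and $\hat{x}(t)=x(t)$ if $u(t)c(t)=1$. Define the error $\Delta(0)=0$ and $\Delta(t)=x(t)-a\hat{x}(t-1)$, and the cost $d(\Delta,c,u)=\lambda u+(1-uc)\Delta^2$ with $\lambda>0$. For $\gamma>0$ consider the problem of minimizing $\mathbb{E}_{\phi}\big[\exp\big(\gamma\sum_{t=0}^{T} d(\Delta(t),c(t),u(t))\big)\big]$ over policies $\phi=(\phi_0,\ldots,\phi_T)$. Then there is no loss of optimality in restricting to policies of the form $u(t)=\phi_t(\Delta(t),c(t))$; i.e., $\{(\Delta(t),c(t))\}$ is a controlled Markov process (an information state) with control $u(t)$, and the problem is a Markov decision process with state space $\mathbb{R}\times\{0,1\}$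 and action space $\{0,1\}$.
   Context: $\mathbb{E}_\phi$ denotes expectation under the probability measure induced by the policy $\phi$. The error evolves as $\Delta(t+1)=a\Delta(t)+w(t)$ if $u(t)c(t)=0$ and $\Delta(t+1)=w(t)$ if $u(t)c(t)=1$. *)

(* Defs.v *)
From HB Require Import structures.
From mathcomp Require Import all_boot all_order all_algebra.
From mathcomp Require Import all_classical all_reals all_analysis.
Set Implicit Arguments. Unset Strict Implicit. Unset Printing Implicit Defensive.
Import Order.TTheory GRing.Theory Num.Theory.
Local Open Scope classical_set_scope.
Local Open Scope ring_scope.

Section remote_estimation.
Variable R : realType.

(* Histories are stored in forward order: xs = [:: x(0); ...; x(t)],
   cs = [:: c(0); ...; c(t)], us = [:: u(0); ...; u(t-1)] (at time t). *)

Definition policy := nat -> seq R -> seq bool -> seq bool -> bool.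

Definition mpolicy := nat -> R -> bool -> bool.

(* phi_t is a measurable function of the information I(t), for t = 0..T
   (the discrete components c, u carry the discrete sigma-algebra, so joint
   measurability amounts to measurability in x(0..t) for each fixed (c,u)). *)
Definition policy_measurable (T : nat) (phi : policy) : Prop :=
  forall t (cs us : seq bool), (t <= T)%N -> size cs = t.+1 -> size us = t ->
    measurable_fun [set: (t.+1).-tuple R]
      (fun xs : (t.+1).-tuple R => phi t (tval xs) cs us).

Definition mpolicy_measurable (T : nat) (psi : mpolicy) : Prop :=
  forall t (c : bool), (t <= T)%N -> measurable_fun [set: R] (fun D : R => psi t D c).

Fixpoint xhat (a : R) (xs : seq R) (cs us : seq bool) (t : nat) : R :=
  match t with
  | 0 => 0
  | t'.+1 => if nth false us t && nth false cs t then nth 0 xs t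
             else a * xhat a xs cs us t'
  end.

Definition Delta (a : R) (xs : seq R) (cs us : seq bool) (t : nat) : R :=
  match t with
  | 0 => 0
  | t'.+1 => nth 0 xs t - a * xhat a xs cs us t'
  end.

Definition stage_cost (lambda : R) (D : R) (c u : bool) : R :=
  lambda * (u%:R) + (1 - (u && c)%:R) * D ^+ 2.

Definition chan_trans (p01 p10 : R) (c c' : bool) : R :=
  if c then (if c' then 1 - p10 else p10) else (if c' then p01 else 1 - p01).

Definition chan_init (pi1 : R) (c : bool) : R := if c then pi1 else 1 - pi1.

(* Conditional expectation, given the history (xs, cs, us) at time t, of
   exp(gamma * sum_{s=t}^{t+n} d(Delta(s), c(s), u(s))) under policy phi,
   computed by iterated integration over w(t) ~ N(0, sigma^2) and c(t+1). *)
Fixpoint cost_to_go (a sigma lambda gamma p01 p10 : R) (phi : policy)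
    (n t : nat) (xs : seq R) (cs us : seq bool) {struct n} : \bar R :=
  let u := phi t xs cs us in
  let e := expR (gamma * stage_cost lambda (Delta a xs cs us t) (nth false cs t) u) in
  match n with
  | 0 => (e%:E)%E
  | n'.+1 =>
      (e%:E *
       \int[normal_prob 0 sigma]_w
          ((chan_trans p01 p10 (nth false cs t) false)%:E *
             cost_to_go a sigma lambda gamma p01 p10 phi n' t.+1
               (rcons xs (a * nth 0 xs t + w)%R) (rcons cs false) (rcons us u)
           + (chan_trans p01 p10 (nth false cs t) true)%:E *
             cost_to_go a sigma lambda gamma p01 p10 phi n' t.+1
               (rcons xs (a * nth 0 xs t + w)%R) (rcons cs true) (rcons us u)))%E
  end.

Definition total_cost (a sigma lambda gamma p01 p10 pi1 : R) (T : nat)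
    (phi : policy) : \bar R :=
  (\int[normal_prob 0 1]_x0
     ((chan_init pi1 false)%:E *
        cost_to_go a sigma lambda gamma p01 p10 phi T 0 [:: x0] [:: false] [::]
      + (chan_init pi1 true)%:E *
        cost_to_go a sigma lambda gamma p01 p10 phi T 0 [:: x0] [:: true] [::]))%E.

Definition lift_mpolicy (a : R) (psi : mpolicy) : policy :=
  fun t xs cs us => psi t (Delta a xs cs us t) (nth false cs t).

End remote_estimation.

(* Main.v *)
Require Import Defs.
From HB Require Import structures.
From mathcomp Require Import all_boot all_order all_algebra.
From mathcomp Require Import all_classical all_reals all_analysis.
From mathcomp Require Import ring lra measurable_realfun.
Import Order.TTheory GRing.Theory Num.Theory.
Local Open Scope classical_set_scope.
Local Open Scope ring_scope.
Set Implicit Arguments. Unset Strict Implicit. Unset Printing Implicit Defensive.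
Lemma le_int_nm d (T : measurableType d) (R : realType)
  (mu : {measure set T -> \bar R}) (f g : T -> \bar R) :
  (forall x, (0 <= f x)%E) -> (forall x, (f x <= g x)%E) ->
  (\int[mu]_x f x <= \int[mu]_x g x)%E.
Proof.
move=> f0 fg.
have g0 : forall x, (0 <= g x)%E by move=> x; exact: le_trans (f0 x) (fg x).
rewrite !ge0_integralTE//.
apply: ereal_sup_le => _ [h hf <-]; exists h => //= x.
exact: le_trans (hf x) (fg x).
Qed.

Section proof.
Context (R : realType) (a sigma lambda gamma p01 p10 : R).
Hypotheses (hp01 : 0 <= p01 <= 1) (hp10 : 0 <= p10 <= 1).

Lemma xhat_rcons (xs : seq R) (cs us : seq bool) y c u k :
  (k < size xs)%N -> (k < size cs)%N -> (k < size us)%N ->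
  xhat a (rcons xs y) (rcons cs c) (rcons us u) k = xhat a xs cs us k.
Proof.
elim: k => [|k IH] //= h1 h2 h3.
rewrite !nth_rcons h1 h2 h3 IH //; exact: ltnW.
Qed.

Definition nxt (u c : bool) (D w : R) : R := if u && c then w else a * D + w.

Lemma Delta_next (xs : seq R) (cs us : seq bool) t c' u w :
  (0 < t)%N -> size xs = t.+1 -> size cs = t.+1 -> size us = t ->
  Delta a (rcons xs (a * nth 0 xs t + w)) (rcons cs c') (rcons us u) t.+1
  = nxt u (nth false cs t) (Delta a xs cs us t) w.
Proof.
case: t => [//|t] _ hx hc hu.
rewrite /Delta /nxt /=.
rewrite !nth_rcons hx hc hu ltnn eqxx !ltnSn.
rewrite xhat_rcons ?hx ?hc ?hu //.
rewrite ltnn eqxx.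
by case: (u && nth false cs t.+1) => /=; ring.
Qed.

Lemma chan_trans_ge0 c c' : 0 <= chan_trans p01 p10 c c'.
Proof.
case/andP: hp01 => h1 h2; case/andP: hp10 => h3 h4.
by case: c; case: c' => /=; rewrite ?subr_ge0.
Qed.

Lemma cost_ge0 phi n t xs cs us :
  (0 <= cost_to_go a sigma lambda gamma p01 p10 phi n t xs cs us)%E.
Proof.
elim: n t xs cs us => [|n IH] t xs cs us /=.
  by rewrite lee_fin expR_ge0.
apply: mule_ge0; first by rewrite lee_fin expR_ge0.
apply: integral_ge0 => w _; apply: adde_ge0; apply: mule_ge0 => //;
  by rewrite lee_fin chan_trans_ge0.
Qed.

End proof.

Section proof2.
Context (R : realType) (a sigma lambda gamma p01 p10 : R).
Hypotheses (hp01 : 0 <= p01 <= 1) (hp10 : 0 <= p10 <= 1).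

Definition eeR (D : R) (c u : bool) : \bar R :=
  (expR (gamma * stage_cost lambda D c u))%:E.

Definition Qf (Wn : R -> bool -> \bar R) (u : bool) (D : R) (c : bool) : \bar R :=
  (eeR D c u * \int[normal_prob 0 sigma]_w
     ((chan_trans p01 p10 c false)%:E * Wn (nxt a u c D w) false
      + (chan_trans p01 p10 c true)%:E * Wn (nxt a u c D w) true))%E.

Fixpoint W (n : nat) (D : R) (c : bool) : \bar R :=
  match n with
  | 0 => mine (eeR D c false) (eeR D c true)
  | n'.+1 => mine (Qf (W n') false D c) (Qf (W n') true D c)
  end.

Definition best (n : nat) (D : R) (c : bool) : bool :=
  match n with
  | 0 => (eeR D c true < eeR D c false)%E
  | n'.+1 => (Qf (W n') true D c < Qf (W n') false D c)%E
  end.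

Lemma mine_sel (x y : \bar R) : mine x y = if (y < x)%E then y else x.
Proof.
rewrite minEle leNgt.
by case: (y < x)%E.
Qed.

Lemma W0E D c : W 0 D c = eeR D c (best 0 D c).
Proof. by rewrite /= mine_sel; case: ifP. Qed.

Lemma WSE n D c : W n.+1 D c = Qf (W n) (best n.+1 D c) D c.
Proof. by rewrite /= mine_sel; case: ifP. Qed.

Lemma W0_le D c u : (W 0 D c <= eeR D c u)%E.
Proof. by case: u; rewrite /= ge_min lexx ?orbT. Qed.

Lemma WS_le n D c u : (W n.+1 D c <= Qf (W n) u D c)%E.
Proof. by case: u; rewrite /= ge_min lexx ?orbT. Qed.

Lemma ee_ge0 D c u : (0 <= eeR D c u)%E.
Proof. by rewrite lee_fin expR_ge0. Qed.

Lemma W_ge0 n D c : (0 <= W n D c)%E.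
Proof.
elim: n D c => [|n IH] D c /=; rewrite le_min.
  by rewrite !ee_ge0.
by apply/andP; split; apply: mule_ge0; rewrite ?ee_ge0 //;
  apply: integral_ge0 => w _; apply: adde_ge0; apply: mule_ge0 => //;
  rewrite lee_fin chan_trans_ge0.
Qed.

Lemma lowerA phi n t xs cs us :
  (0 < t)%N -> size xs = t.+1 -> size cs = t.+1 -> size us = t ->
  (W n (Delta a xs cs us t) (nth false cs t)
   <= cost_to_go a sigma lambda gamma p01 p10 phi n t xs cs us)%E.
Proof.
elim: n t xs cs us => [|n IH] t xs cs us t0 hx hc hu.
  exact: W0_le.
apply: le_trans (WS_le _ _ _ (phi t xs cs us)) _.
rewrite /= /Qf; apply: lee_wpmul2l; first exact: ee_ge0.
apply: le_int_nm.
  by move=> w; apply: adde_ge0; apply: mule_ge0; rewrite ?W_ge0 // lee_fin chan_trans_ge0.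
move=> w; apply: leeD; apply: lee_wpmul2l; rewrite ?lee_fin ?chan_trans_ge0 //.
- have := IH t.+1 (rcons xs (a * nth 0 xs t + w)) (rcons cs false)
     (rcons us (phi t xs cs us)) isT.
  rewrite !size_rcons hx hc hu Delta_next // nth_rcons hc ltnn eqxx.
  by apply.
- have := IH t.+1 (rcons xs (a * nth 0 xs t + w)) (rcons cs true)
     (rcons us (phi t xs cs us)) isT.
  rewrite !size_rcons hx hc hu Delta_next // nth_rcons hc ltnn eqxx.
  by apply.
Qed.

End proof2.

Section proof3.
Context (R : realType) (a sigma lambda gamma p01 p10 : R).
Hypotheses (hp01 : 0 <= p01 <= 1) (hp10 : 0 <= p10 <= 1).
Hypotheses (hlambda : 0 < lambda) (hgamma : 0 < gamma).

Local Notation ee := (eeR lambda gamma).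
Local Notation W := (W a sigma lambda gamma p01 p10).
Local Notation best := (best a sigma lambda gamma p01 p10).

Definition psistar (T : nat) : mpolicy R :=
  fun t D c => (t != 0)%N && best (T - t) D c.

Lemma markovB T n t xs cs us :
  (0 < t)%N -> (t + n)%N = T -> size xs = t.+1 -> size cs = t.+1 -> size us = t ->
  cost_to_go a sigma lambda gamma p01 p10 (lift_mpolicy a (psistar T)) n t xs cs us
  = W n (Delta a xs cs us t) (nth false cs t).
Proof.
elim: n t xs cs us => [|n IH] t xs cs us t0 tT hx hc hu.
  rewrite W0E /= /lift_mpolicy /psistar.
  have -> : (T - t = 0)%N by rewrite -tT addn0 subnn.
  by rewrite -lt0n t0.
rewrite WSE /= /lift_mpolicy /psistar -lt0n t0 /=.
have -> : (T - t = n.+1)%N by rewrite -tT addnC addnK.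
rewrite /Qf; congr (_ * _)%E.
apply: eq_integral => w _.
rewrite !(IH t.+1) ?size_rcons ?hx ?hc ?hu ?addSnnS //.
by rewrite !Delta_next // !nth_rcons hc ltnn eqxx.
Qed.

Lemma ee0_le c u : (ee 0 c false <= ee 0 c u)%E.
Proof.
rewrite /eeR /stage_cost lee_fin ler_expR /= expr0n /= !mulr0 !addr0.
by rewrite mulr0 mulr_ge0 ?mulr_ge0 ?ler0n ?ltW.
Qed.

Lemma topC phi T x0 c :
  (cost_to_go a sigma lambda gamma p01 p10 (lift_mpolicy a (psistar T)) T 0 [:: x0] [:: c] [::]
  <= cost_to_go a sigma lambda gamma p01 p10 phi T 0 [:: x0] [:: c] [::])%E.
Proof.
case: T => [|n].
  rewrite /=.
  have -> : lift_mpolicy a (psistar 0) 0 [:: x0] [:: c] [::] = false by reflexivity.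
  exact: (ee0_le c (phi 0%N [:: x0] [:: c] [::])).
rewrite /=.
have -> : lift_mpolicy a (psistar n.+1) 0 [:: x0] [:: c] [::] = false by reflexivity.
have i0 : forall u, (0 <= \int[normal_prob 0 sigma]_w
      ((chan_trans p01 p10 c false)%:E *
       cost_to_go a sigma lambda gamma p01 p10 phi n 1
         [:: x0; (a * x0 + w)%R] [:: c; false] [:: u] +
       (chan_trans p01 p10 c true)%:E *
       cost_to_go a sigma lambda gamma p01 p10 phi n 1
         [:: x0; (a * x0 + w)%R] [:: c; true] [:: u]))%E.
  move=> u; apply: integral_ge0 => w _; apply: adde_ge0; apply: mule_ge0;
    by rewrite ?lee_fin ?chan_trans_ge0 ?cost_ge0.
apply: le_trans; last first.
  apply: lee_wpmul2r; [exact: i0 | exact: (ee0_le c (phi 0%N [:: x0] [:: c] [::]))].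
apply: lee_wpmul2l; first exact: ee_ge0.
apply: le_int_nm.
  move=> w; apply: adde_ge0; apply: mule_ge0;
    by rewrite ?lee_fin ?chan_trans_ge0 ?cost_ge0.
move=> w; rewrite !(@markovB n.+1 n 1) //.
apply: leeD; apply: lee_wpmul2l; rewrite ?lee_fin ?chan_trans_ge0 //.
- have := @lowerA R a sigma lambda gamma p01 p10 hp01 hp10 phi n 1 [:: x0; (a * x0 + w)%R] [:: c; false]
     [:: phi 0%N [:: x0] [:: c] [::]] isT erefl erefl erefl.
  by apply.
- have := @lowerA R a sigma lambda gamma p01 p10 hp01 hp10 phi n 1 [:: x0; (a * x0 + w)%R] [:: c; true]
     [:: phi 0%N [:: x0] [:: c] [::]] isT erefl erefl erefl.
  by apply.
Qed.

End proof3.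

Section proof4.
Context (R : realType) (a sigma lambda gamma p01 p10 : R).
Hypotheses (hp01 : 0 <= p01 <= 1) (hp10 : 0 <= p10 <= 1).

Local Notation ee := (eeR lambda gamma).
Local Notation W := (W a sigma lambda gamma p01 p10).
Local Notation best := (best a sigma lambda gamma p01 p10).

Lemma ee_meas c u : measurable_fun setT (fun D : R => ee D c u).
Proof.
apply/measurable_EFinP; apply: measurableT_comp; first exact: measurable_expR.
rewrite /stage_cost; apply: measurable_funM => //.
apply: measurable_funD => //; apply: measurable_funM => //.
Qed.

Lemma Q_meas n (IH : forall c, measurable_fun setT (fun D : R => W n D c)) u c :
  measurable_fun setT (fun D => Qf a sigma lambda gamma p01 p10 (W n) u D c).
Proof.
rewrite /Qf; apply: emeasurable_funM; first exact: ee_meas.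
apply: (@measurable_fun_fubini_tonelli_F _ _ R _ R (normal_prob 0 sigma)
    (fun z => ((chan_trans p01 p10 c false)%:E * W n (nxt a u c z.1 z.2) false
      + (chan_trans p01 p10 c true)%:E * W n (nxt a u c z.1 z.2) true)%E)).
  apply: emeasurable_funD; apply: emeasurable_funM => //;
    apply: (measurableT_comp (IH _)); rewrite /nxt; case: (u && c) => /=.
  1-4: first [exact: measurable_snd | apply: measurable_funD => //;
    apply: measurable_funM => //; exact: measurable_fst].
move=> z; apply: adde_ge0; apply: mule_ge0;
  by rewrite ?W_ge0 // lee_fin chan_trans_ge0.
Qed.

Lemma W_meas n c : measurable_fun setT (fun D : R => W n D c).
Proof.
elim: n c => [|n IH] c /=.
  by apply: measurable_mine; exact: ee_meas.
by apply: measurable_mine; exact: Q_meas.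
Qed.

Lemma best_meas n c : measurable_fun setT (fun D : R => best n D c).
Proof.
case: n => [|n] /=.
  by apply: measurable_fun_lte; exact: ee_meas.
by apply: measurable_fun_lte; apply: Q_meas; exact: W_meas.
Qed.

Lemma psistar_meas T : mpolicy_measurable T (psistar a sigma lambda gamma p01 p10 T).
Proof.
move=> t c _; rewrite /psistar.
case: t => [|t] /=; first exact: measurable_cst.
exact: best_meas.
Qed.

Lemma nth_meas n k : measurable_fun setT (fun xs : n.-tuple R => nth 0 (tval xs) k).
Proof.
case: (ltnP k n) => hk.
  have -> : (fun xs : n.-tuple R => nth 0 (tval xs) k) =
            (fun xs => tnth xs (Ordinal hk)).
    by apply: funext => xs; rewrite (tnth_nth 0).
  exact: measurable_tnth.
have -> : (fun xs : n.-tuple R => nth 0 (tval xs) k) = (fun _ => 0).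
  by apply: funext => xs; rewrite nth_default // size_tuple.
exact: measurable_cst.
Qed.

Lemma xhat_meas n (cs us : seq bool) k :
  measurable_fun setT (fun xs : n.-tuple R => xhat a (tval xs) cs us k).
Proof.
elim: k => [|k IH] /=; first exact: measurable_cst.
case: (nth false us k.+1 && nth false cs k.+1); first exact: nth_meas.
by apply: measurable_funM => //.
Qed.

Lemma Delta_meas n (cs us : seq bool) t :
  measurable_fun setT (fun xs : n.-tuple R => Delta a (tval xs) cs us t).
Proof.
case: t => [|t] /=; first exact: measurable_cst.
apply: measurable_funB; first exact: nth_meas.
by apply: measurable_funM => //; exact: xhat_meas.
Qed.

Lemma lift_meas T psi : mpolicy_measurable T psi ->
  policy_measurable T (lift_mpolicy a psi).
Proof.
move=> hpsi t cs us tT _ _; rewrite /lift_mpolicy.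
have h1 := hpsi t (nth false cs t) tT.
have h2 := Delta_meas (n:=t.+1) cs us t.
have := measurableT_comp h1 h2.
by [].
Qed.

End proof4.

Lemma chan_init_ge0 (R : realType) (pi1 : R) c : 0 <= pi1 <= 1 -> 0 <= chan_init pi1 c.
Proof. by case/andP => h1 h2; case: c => //=; rewrite subr_ge0. Qed.

Theorem lemma1 (R : realType) (a sigma lambda gamma p01 p10 pi1 : R) (T : nat)
    (hsigma : 0 < sigma) (hlambda : 0 < lambda) (hgamma : 0 < gamma)
    (hp01 : 0 <= p01 <= 1) (hp10 : 0 <= p10 <= 1) (hpi1 : 0 <= pi1 <= 1) :
  ereal_inf [set total_cost a sigma lambda gamma p01 p10 pi1 T phi
            | phi in [set phi : policy R | policy_measurable T phi]]
  = ereal_inf [set total_cost a sigma lambda gamma p01 p10 pi1 T (lift_mpolicy a psi)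
              | psi in [set psi : mpolicy R | mpolicy_measurable T psi]].
Proof.
set P := psistar a sigma lambda gamma p01 p10 T.
apply/eqP; rewrite eq_le; apply/andP; split.
  apply: le_ereal_inf => _ [psi hpsi <-]; exists (lift_mpolicy a psi) => //.
  exact: lift_meas.
apply: le_ereal_inf_tmp => _ [phi hphi <-].
apply: (@le_trans _ _ (total_cost a sigma lambda gamma p01 p10 pi1 T (lift_mpolicy a P))).
  apply: ereal_inf_lbound; exists P => //.
  exact: psistar_meas.
rewrite /total_cost; apply: le_int_nm.
  move=> x; apply: adde_ge0; apply: mule_ge0;
    by rewrite ?cost_ge0 // lee_fin chan_init_ge0.
move=> x; apply: leeD; apply: lee_wpmul2l; rewrite ?lee_fin ?chan_init_ge0 //;
  exact: topC.
Qed.
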